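(* Assume AS.1 and AS.3, let $\omega\in(0,1)$ and consider a realization of the SKOFFAR$p$ algorithm. Let $$k_*=\left\lceil\frac{2L_p\,\epsilon^{-(p+1)/p}}{\vartheta\nu_0\,\omega^{(p+1)/p}}\right\rceil,$$ and let $k_0<N_1(\epsilon)$ be an iteration index such that at least $k_*$ of the iterations with indices $0,\dots,k_0-1$ are $\omega$-true. Then $k_1$ is finite, $k_1\le k_0$, and $\sigma_k\ge 2L_p$ for all $k\ge k_1$.
   Context: Let $f:\mathbb{R}^n\to\mathbb{R}$ and $p\ge1$ an integer; $\|\cdot\|$ is the Euclidean norm for vectors, the spectral norm for matrices and the induced (subordinate) norm for tensors; $T[d]^i$ denotes a symmetric $i$-tensor applied to $i$ copies of $d$. Assumptions: AS.1: $f$ is $p$ times continuously differentiable on $\mathbb{R}^n$. AS.3: there is $L_p\ge 0$ with $\|\nabla^p f(x)-\nabla^p f(y)\|\le L_p\|x-y\|$ for all $x,y$. For $x,s\in\mathbb{R}^n$ let $T_{f,p}(x,s)=f(x)+\sum_{i=1}^p\frac{1}{i!}\nabla^i f(x)[s]^i$. Write $g_k=\nabla f(x_k)$. The SKOFFAR$p$ algorithm: given $x_0\in\mathbb{R}^n$, $\nu_0>0$, $\epsilon\in(0,1]$, $\theta>1$, $\mu_{-1}\ge 0$, $\vartheta\in(0,1)$ and a fixed distribution $\mathcal S$ of $\ell\times n$ random matrices ($\ell<n$), for $k=0,1,2,\dots$: (i) if $k=0$ set $\sigma_0=\nu_0$; otherwise choose $\sigma_k\in[\vartheta\nu_k,\max(\nu_k,\mu_k)]$,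 where $\mu_k=\max\Big[\mu_{k-1},\frac{\|S_{k-1}g_k\|-\|\nabla_{\hat s}\widehat T_{k-1}(\hat s_{k-1})\|}{\kappa_{S,k-1}\|s_{k-1}\|^p}\Big]$ for some number $\kappa_{S,k-1}\ge\|S_{k-1}\|$; (ii) draw $S_k\in\mathbb{R}^{\ell\times n}$ from $\mathcal S$, define for $\hat s\in\mathbb{R}^\ell$ the sketched Taylor model $\widehat T_k(\hat s)=T_{f,p}(x_k,S_k^T\hat s)$ and the sketched model $\widehat m_k(\hat s)=\widehat T_k(\hat s)+\frac{\sigma_k}{(p+1)!}\|S_k^T\hat s\|^{p+1}$, and compute $\hat s_k\in\mathbb{R}^\ell$ with $\widehat m_k(\hat s_k)<\widehat m_k(0)$ and $\|\nabla_{\hat s}\widehat T_k(\hat s_k)\|\le\theta\frac{\sigma_k}{p!}\|S_k^T\hat s_k\|^{p-1}\|S_kS_k^T\hat s_k\|$; set $s_k=S_k^T\hat s_k$; (iii) set $x_{k+1}=x_k+s_k$ and $\nu_{k+1}=\nu_k+\nu_k\|s_k\|^{p+1}$. $N_1(\epsilon)=\min\{k\in\mathbb N:\|g_k\|\le\epsilon\}$ (possibly $+\infty$). Define $k_1=\inf\{k\ge1:\nu_k\ge 2L_p/\vartheta\}$. For $\omega\in(0,1)$, an iteration $k\in\{0,\dots,N_1(\epsilon)-2\}$ is called $\omega$-true if $\|s_k\|^p\ge\omega\epsilon$. *)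

(* Defs.v *)
From HB Require Import structures.
From mathcomp Require Import all_boot all_order all_algebra.
From mathcomp Require Import all_classical all_reals all_analysis.
Set Implicit Arguments. Unset Strict Implicit. Unset Printing Implicit Defensive.
Import Order.TTheory GRing.Theory Num.Theory.
Import numFieldNormedType.Exports.
Local Open Scope ring_scope.

Section Defs.
Variable R : realType.

Definition enorm (m : nat) (v : 'cV[R]_m) : R := Num.sqrt (\sum_(i < m) v i 0 ^+ 2).

(* iterated directional derivative: dder f [:: d1; ...; di] x = nabla^i f(x)[d1,...,di] *)
Fixpoint dder (m : nat) (f : 'cV[R]_m -> R) (ds : seq 'cV[R]_m) : 'cV[R]_m -> R :=
  match ds with
  | [::] => f
  | d :: ds' => fun x => 'D_d (dder f ds') x
  end.

Definition Cp (m : nat) (f : 'cV[R]_m -> R) (p : nat) : Prop :=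
  (forall ds : seq 'cV[R]_m, (size ds < p)%N -> forall x, differentiable (dder f ds) x) /\
  (forall ds : seq 'cV[R]_m, size ds = p -> continuous (dder f ds)).

(* AS.3 : || nabla^p f(x) - nabla^p f(y) || <= L ||x - y||, with the induced tensor norm
   (sup over unit vectors d1..dp of |(nabla^p f(x) - nabla^p f(y))[d1,...,dp]|) *)
Definition AS3 (m : nat) (f : 'cV[R]_m -> R) (p : nat) (L : R) : Prop :=
  forall x y (ds : seq 'cV[R]_m), size ds = p -> all (fun d => enorm d == 1) ds ->
    `|dder f ds x - dder f ds y| <= L * enorm (x - y).

Definition grad (m : nat) (F : 'cV[R]_m -> R) (x : 'cV[R]_m) : 'cV[R]_m :=
  \col_(i < m) 'D_(delta_mx i 0) F x.

Definition taylor (m : nat) (f : 'cV[R]_m -> R) (p : nat) (x s : 'cV[R]_m) : R :=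
  f x + \sum_(1 <= i < p.+1) (i`!%:R)^-1 * dder f (nseq i s) x.

Definition skT (m l : nat) (f : 'cV[R]_m -> R) (p : nat) (x : 'cV[R]_m)
  (S : 'M[R]_(l, m)) (sh : 'cV[R]_l) : R := taylor f p x (S^T *m sh).

Definition skm (m l : nat) (f : 'cV[R]_m -> R) (p : nat) (x : 'cV[R]_m)
  (S : 'M[R]_(l, m)) (sigma : R) (sh : 'cV[R]_l) : R :=
  skT f p x S sh + sigma / (p.+1)`!%:R * enorm (S^T *m sh) ^+ p.+1.

Definition skoffar_run (m l : nat) (f : 'cV[R]_m -> R) (p : nat)
  (nu0 theta mum1 vth : R)
  (x : nat -> 'cV[R]_m) (nu sigma mu kappa : nat -> R)
  (S : nat -> 'M[R]_(l, m)) (sh : nat -> 'cV[R]_l) : Prop :=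
  let s k := (S k)^T *m sh k in
  [/\ [/\ nu 0%N = nu0, sigma 0%N = nu0 &
      (* mu 0 stands for mu_0, taken equal to mu_{-1} *)
      mu 0%N = mum1],
      (forall k, (0 < k)%N ->
         kappa k.-1 >= 0 /\
         (forall v : 'cV[R]_m, enorm (S k.-1 *m v) <= kappa k.-1 * enorm v) /\
         mu k = Num.max (mu k.-1)
           ((enorm (S k.-1 *m grad f (x k)) - enorm (grad (skT f p (x k.-1) (S k.-1)) (sh k.-1)))
              / (kappa k.-1 * enorm (s k.-1) ^+ p))),
      (forall k, (0 < k)%N -> vth * nu k <= sigma k <= Num.max (nu k) (mu k)) &
      (forall k,
         [/\ skm f p (x k) (S k) (sigma k) (sh k) < skm f p (x k) (S k) (sigma k) 0,
             enorm (grad (skT f p (x k) (S k)) (sh k))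
               <= theta * (sigma k / p`!%:R) * enorm (s k) ^+ p.-1
                  * enorm (S k *m ((S k)^T *m sh k)),
             x k.+1 = x k + s k &
             nu k.+1 = nu k + nu k * enorm (s k) ^+ p.+1])].

End Defs.

(* Main.v *)
Require Import Defs.
From HB Require Import structures.
From mathcomp Require Import all_boot all_order all_algebra.
From mathcomp Require Import all_classical all_reals all_analysis.
From mathcomp Require Import ring lra.
Import Order.TTheory GRing.Theory Num.Theory.
Import numFieldNormedType.Exports.
Local Open Scope ring_scope.

Theorem mainTheorem7 (R : realType) (n l p : nat) (f : 'cV[R]_n -> R) (Lp : R)
  (nu0 eps theta mum1 vth omega : R)
  (x : nat -> 'cV[R]_n) (nu sigma mu kappa : nat -> R)
  (S : nat -> 'M[R]_(l, n)) (sh : nat -> 'cV[R]_l) (k0 : nat) :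
  (1 <= p)%N -> (l < n)%N ->
  Cp f p -> 0 <= Lp -> AS3 f p Lp ->
  0 < nu0 -> 0 < eps <= 1 -> 1 < theta -> 0 <= mum1 -> 0 < vth < 1 ->
  0 < omega < 1 ->
  skoffar_run f p nu0 theta mum1 vth x nu sigma mu kappa S sh ->
  (* k0 < N_1(eps) *)
  (forall j, (j <= k0)%N -> eps < enorm (grad f (x j))) ->
  (0 < k0)%N ->
  (* at least k_* of the iterations 0, ..., k0-1 are omega-true *)
  Num.ceil (2 * Lp * powR eps (- ((p.+1)%:R / p%:R))
              / (vth * nu0 * powR omega ((p.+1)%:R / p%:R)))
    <= (count (fun k =>
          [forall j : 'I_k.+2, eps < enorm (grad f (x j))] &&
          (omega * eps <= enorm ((S k)^T *m sh k) ^+ p)) (iota 0 k0))%:Z ->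
  exists k1 : nat,
    [/\ (1 <= k1)%N, 2 * Lp / vth <= nu k1,
        (forall k, (1 <= k)%N -> (k < k1)%N -> nu k < 2 * Lp / vth),
        (k1 <= k0)%N &
        (forall k, (k1 <= k)%N -> 2 * Lp <= sigma k)].
Proof.
move=> p1 _ _ Lp0 _ nu0p /andP[eps0 _] _ _ /andP[vth0 _] /andP[om0 _] run _ k0p.
case: run => [[nuE _ _] _ sigB step].
set a := (p.+1)%:R / p%:R : R.
set P := (fun k => _ && _).
move=> Hc.
set c := powR (omega * eps) a.
have c0 : 0 < c by apply: powR_gt0; apply: mulr_gt0.
have en0 : forall m (v : 'cV[R]_m), 0 <= enorm v by move=> m v; rewrite /enorm sqrtr_ge0.
have pR : (p%:R : R) != 0 by rewrite pnatr_eq0 -lt0n.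
have keyP : forall k, P k -> c <= enorm ((S k)^T *m sh k) ^+ p.+1.
  move=> k /andP[_ H].
  set e := enorm _ in H *.
  have e0 : 0 <= e by apply: en0.
  rewrite -powR_mulrn // -[(p.+1)%:R](@mulfVK _ p%:R) // mulrC.
  rewrite -/a powRrM powR_mulrn //.
  apply: ge0_ler_powR => //; first by rewrite /a divr_ge0.
  - by rewrite nnegrE mulr_ge0 // ltW.
  - by rewrite nnegrE exprn_ge0.
have inv : forall k, nu0 + nu0 * c * (count P (iota 0 k))%:R <= nu k.
  elim=> [|k IH]; first by rewrite /= nuE mulr0 addr0.
  have [_ _ _ ->] := step k.
  have nuk : nu0 <= nu k.
    apply: le_trans IH; by rewrite lerDl !mulr_ge0 // ltW.
  rewrite -addn1 iotaD count_cat /= addn0 natrD mulrDr addrA.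
  apply: lerD => //.
  case: (boolP (P k)) => Pk /=.
    rewrite mulr1; apply: ler_pM; [exact: ltW|exact: ltW|by []|exact: keyP].
  by rewrite mulr0 mulr_ge0 // ?exprn_ge0 // (le_trans (ltW nu0p)).
have nuk0 : forall k, nu0 <= nu k.
  move=> k; apply: le_trans (inv k); by rewrite lerDl !mulr_ge0 // ltW.
have mono : forall i j, (i <= j)%N -> nu i <= nu j.
  move=> i j /subnK <-; elim: (j - i)%N => [|d IH] //.
  rewrite addSn; have [_ _ _ ->] := step (d + i)%N.
  by rewrite (le_trans IH) // lerDl mulr_ge0 // ?exprn_ge0 // (le_trans (ltW nu0p)).
set T := 2 * Lp / vth.
have HT : T <= nu k0.
  apply: le_trans (inv k0).
  move: Hc; rewrite ceil_le_int => Hc.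
  have -> : T = nu0 * c * (2 * Lp * powR eps (- a) / (vth * nu0 * powR omega a)).
    rewrite /c powRM ?ltW // powRN /T.
    have h1 : powR omega a != 0 by rewrite gt_eqF // powR_gt0.
    have h2 : powR eps a != 0 by rewrite gt_eqF // powR_gt0.
    have h3 : nu0 != 0 by rewrite gt_eqF.
    have h4 : vth != 0 by rewrite gt_eqF.
    by field; rewrite h1 h2 h3 h4.
  have H1 : nu0 * c * (2 * Lp * powR eps (- a) / (vth * nu0 * powR omega a))
     <= nu0 * c * (count P (iota 0 k0))%:R.
    rewrite ler_pM2l ?mulr_gt0 //.
  apply: le_trans H1 _.
  by rewrite lerDr ltW.
have ex : exists k, (0 < k)%N && (T <= nu k) by exists k0; rewrite k0p HT.
case: (ex_minnP ex) => k1 /andP[k1p Tk1] kmin.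
exists k1; split => //.
- move=> k kp kk; rewrite ltNge; apply/negP => Hk.
  by have := kmin k; rewrite kp Hk leqNgt kk => /(_ isT).
- by apply: kmin; rewrite k0p HT.
- move=> k kk.
  have kp : (0 < k)%N by apply: leq_trans kk.
  have [+ _] := andP (sigB k kp) => Hs.
  apply: le_trans Hs.
  have : vth * T <= vth * nu k by rewrite ler_pM2l // (le_trans Tk1) // mono.
  by rewrite /T mulrC divfK ?gt_eqF.
Qed.
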